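(* Let $m$ be a positive integer and define $\zeta^m(s,t):=\sum_{n=1}^\infty Z^m_n(s)\,n^{-t}$. Then for $\operatorname{Re}s>0$ and $\operatorname{Re}t>1$, $$\zeta^m(s,t)=\prod_{k=0}^m\zeta(sk+t).$$
   Context: For positive integers $m,N$, $Z^{m}_N(s):=\sum_{n_1|n_2|\cdots|n_m|N}(n_1n_2\cdots n_m)^{-s}$, the sum over all $m$-tuples of positive integers with $n_1\mid n_2\mid\cdots\mid n_m\mid N$. $\zeta$ is the Riemann zeta function. *)

(* Defs.v *)
From Stdlib Require Import Reals.
From Coquelicot Require Import Coquelicot.
From mathcomp Require Import ssreflect ssrbool ssrnat seq prime.

Open Scope R_scope.

(* n ^ w for a positive integer n and complex w:  exp (w * ln n). *)
Definition cpow_nat (n : nat) (w : C) : C :=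
  (Rpower (INR n) (Re w) * cos (Im w * ln (INR n)),
   Rpower (INR n) (Re w) * sin (Im w * ln (INR n))).

(* Z^m_N(s) = sum over n_1 | n_2 | ... | n_m | N of (n_1 ... n_m)^(-s),
   computed by summing over the largest index n_m | N:
   Z^0_N(s) = 1,  Z^(m+1)_N(s) = sum_{d | N} d^(-s) * Z^m_d(s). *)
Fixpoint Zchain (m : nat) (N : nat) (s : C) : C :=
  match m with
  | 0 => RtoC 1
  | m'.+1 => foldr (fun d acc => Cplus (Cmult (cpow_nat d (Copp s)) (Zchain m' d s)) acc)
                   (RtoC 0) (divisors N)
  end.

(* Riemann zeta function via its Dirichlet series (used only for Re w > 1). *)
Definition zeta (w : C) : C :=
  (Series (fun n : nat => Re (cpow_nat n.+1 (Copp w))),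
   Series (fun n : nat => Im (cpow_nat n.+1 (Copp w)))).

(* Dirichlet series zeta^m(s,t) = sum_{n>=1} Z^m_n(s) n^(-t); term for index n is n+1. *)
Definition zeta_m_term (m : nat) (s t : C) (n : nat) : C :=
  Cmult (Zchain m n.+1 s) (cpow_nat n.+1 (Copp t)).

Definition zeta_prod (m : nat) (s t : C) : C :=
  foldr (fun k acc => Cmult (zeta (Cplus (Cmult s (RtoC (INR k))) t)) acc)
        (RtoC 1) (iota 0 m.+1).

(* Main.v *)
Require Import Defs.
From Stdlib Require Import Reals Lra Psatz.
From Coquelicot Require Import Coquelicot.
From mathcomp Require Import ssreflect ssrbool ssrnat seq prime.
Open Scope R_scope.

Lemma cpow_add n w1 w2 : Cmult (cpow_nat n w1) (cpow_nat n w2) = cpow_nat n (Cplus w1 w2).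
Proof.
rewrite /cpow_nat /Cmult /Re /Im /=.
rewrite Rpower_plus Rmult_plus_distr_r cos_plus sin_plus.
f_equal; ring.
Qed.

Lemma cpow_mul d e w : (0 < d)%nat -> (0 < e)%nat ->
  cpow_nat (d * e) w = Cmult (cpow_nat d w) (cpow_nat e w).
Proof.
move=> Hd He.
have Hd' : 0 < INR d by apply: lt_0_INR; apply/ltP.
have He' : 0 < INR e by apply: lt_0_INR; apply/ltP.
rewrite /cpow_nat /Cmult /Re /Im /=.
rewrite mult_INR ln_mult // -Rpower_mult_distr // Rmult_plus_distr_l cos_plus sin_plus.
f_equal; ring.
Qed.

Lemma cpow_1 w : cpow_nat 1 w = RtoC 1.
Proof.
rewrite /cpow_nat /Rpower /= ln_1 !Rmult_0_r exp_0 cos_0 sin_0 /RtoC.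
f_equal; ring.
Qed.

Lemma Cmod_cpow n w : Cmod (cpow_nat n w) = Rpower (INR n) (Re w).
Proof.
rewrite /cpow_nat /Cmod /=.
have Hp : 0 < Rpower (INR n) (Re w) by rewrite /Rpower; apply: exp_pos.
set P := Rpower _ _. set c := cos _. set s := sin _.
have -> : (P * c) ^ 2 + (P * s) ^ 2 = P ^ 2 * (Rsqr s + Rsqr c) by rewrite /Rsqr; ring.
rewrite sin2_cos2 Rmult_1_r sqrt_pow2 => //; rewrite /P; lra.
Qed.

Lemma Rpower_pos x y : 0 < Rpower x y.
Proof. rewrite /Rpower; apply: exp_pos. Qed.

Lemma pkey x q : 1 <= x -> 0 < q ->
  Rpower (x + 1) (- (q + 1)) <= / q * (Rpower x (- q) - Rpower (x + 1) (- q)).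
Proof.
move=> Hx Hq.
rewrite /Rpower.
set a := ln (x + 1). set b := ln x.
have Hx1 : 0 < x + 1 by lra.
have Hab : / (x + 1) <= a - b.
  have H1 : ln (x / (x + 1)) <= x / (x + 1) - 1.
    have := exp_ineq1_le (ln (x / (x + 1))).
    rewrite exp_ln; first lra.
    apply: Rdiv_lt_0_compat; lra.
  have Ek : x / (x + 1) - 1 = - / (x + 1) by field; lra.
  rewrite Ek ln_div in H1; try lra.
  rewrite /a /b; lra.
have Hv : 0 < exp (- q * a) by apply: exp_pos.
have Hu : exp (- q * b) = exp (- q * a) * exp (q * (a - b)).
  rewrite -exp_plus; f_equal; ring.
have He : 1 + q * (a - b) <= exp (q * (a - b)) by apply: exp_ineq1_le.
have Hp : exp (- (q + 1) * a) = exp (- q * a) * / (x + 1).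
  rewrite -(exp_ln (x + 1)) // -exp_Ropp -exp_plus; rewrite -/a; f_equal; ring.
rewrite Hp Hu.
have Hi : 0 < / (x + 1) by apply: Rinv_0_lt_compat.
have Hqi : 0 < / q by apply: Rinv_0_lt_compat.
set v := exp (- q * a) in Hv *.
set E := exp (q * (a - b)) in He *.
have H2 : v * / (x + 1) * q <= v * E - v.
  have : q * / (x+1) <= q * (a - b) by apply: Rmult_le_compat_l; lra.
  nra.
have -> : v * / (x + 1) = / q * (v * / (x + 1) * q) by field; lra.
apply: Rmult_le_compat_l; lra.
Qed.

Lemma pseries p : 1 < p -> ex_series (fun n => Rpower (INR n.+1) (- p)).
Proof.
move=> Hp.
set q := p - 1.
have Hq : 0 < q by rewrite /q; lra.
apply/ex_series_incr_1.
set f := fun n : nat => Rpower (INR n.+2) (- p).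
have Hb : forall n, f n <= / q * (Rpower (INR n.+1) (- q) - Rpower (INR n.+2) (- q)).
  move=> n. rewrite /f.
  have -> : INR n.+2 = INR n.+1 + 1 by rewrite S_INR.
  have -> : - p = - (q + 1) by rewrite /q; ring.
  apply: pkey => //.
  rewrite S_INR; have := pos_INR n; lra.
have Hs : forall N, sum_n f N <= / q * (Rpower (INR 1) (- q) - Rpower (INR N.+2) (- q)).
  elim=> [|N IH].
    rewrite sum_O; apply: Hb.
  rewrite sum_Sn.
  have := Hb N.+1.
  change plus with Rplus.
  move=> H.
  have : / q * (Rpower (INR 1) (- q) - Rpower (INR N.+2) (- q)) +
         / q * (Rpower (INR N.+2) (- q) - Rpower (INR N.+3) (- q)) =
         / q * (Rpower (INR 1) (- q) - Rpower (INR N.+3) (- q)) by ring.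
  lra.
have [l Hl] : ex_finite_lim_seq (sum_n f).
  apply: (ex_finite_lim_seq_incr _ (/ q * Rpower (INR 1) (- q))).
    move=> n; rewrite sum_Sn; change plus with Rplus.
    have : 0 < f n.+1 by apply: Rpower_pos. lra.
  move=> n. have := Hs n. have := Rpower_pos (INR n.+2) (- q).
  have : 0 < / q by apply: Rinv_0_lt_compat.
  nra.
by exists l.
Qed.

From HB Require Import structures.
From mathcomp Require Import all_boot all_algebra.
From mathcomp Require Import Rstruct.

HB.instance Definition _ := Choice.on C.
Lemma C_addA : associative Cplus. Proof. move=> x y z; by rewrite Cplus_assoc. Qed.
Lemma C_addC : commutative Cplus. Proof. move=> x y; by rewrite Cplus_comm. Qed.
Lemma C_add0 : left_id (RtoC 0) Cplus. Proof. move=> x; by rewrite Cplus_0_l. Qed.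
Lemma C_addN : left_inverse (RtoC 0) Copp Cplus. Proof. move=> x; by rewrite Cplus_comm Cplus_opp_r. Qed.
HB.instance Definition _ := GRing.isZmodule.Build C C_addA C_addC C_add0 C_addN.
Lemma C_mulA : associative Cmult. Proof. move=> x y z; by rewrite Cmult_assoc. Qed.
Lemma C_mulC : commutative Cmult. Proof. move=> x y; by rewrite Cmult_comm. Qed.
Lemma C_mul1 : left_id (RtoC 1) Cmult. Proof. move=> x; by rewrite Cmult_1_l. Qed.
Lemma C_mulD : left_distributive Cmult Cplus. Proof. move=> x y z; by rewrite Cmult_plus_distr_r. Qed.
Lemma C_10 : RtoC 1 != RtoC 0. Proof. apply/eqP => H. case: H. exact: R1_neq_R0. Qed.
HB.instance Definition _ := GRing.Zmodule_isComNzRing.Build C C_mulA C_mulC C_mul1 C_mulD C_10.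

Import GRing.Theory.
Local Open Scope ring_scope.

Lemma sel {T : nmodType} (I : eqType) (r : seq I) (k : I) (F : I -> T) : uniq r ->
  \sum_(i <- r) (if i == k then F i else 0) = if k \in r then F k else 0.
Proof.
elim: r => [|x r IH] /=; first by rewrite big_nil.
move=> /andP[xr ur]; rewrite big_cons IH // in_cons.
case: (eqVneq x k) => [<-|xk] /=.
  by rewrite (negbTE xr) addr0.
by rewrite add0r.
Qed.
Arguments sel {T I r} k F _.
Lemma sel' {T : nmodType} (I : eqType) (r : seq I) (k : I) (F : I -> T) : uniq r ->
  \sum_(i <- r) (if k == i then F i else 0) = if k \in r then F k else 0.
Proof. move=> u; rewrite -(sel k F u); apply: eq_bigr => i _; by rewrite eq_sym. Qed.
Arguments sel' {T I r} k F _.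

Lemma conv_sum {T : pzRingType} (a b : nat -> T) N :
  \sum_(1 <= n < N.+1) \sum_(d <- divisors n) b d * a (n %/ d)%N
  = \sum_(1 <= d < N.+1) \sum_(1 <= e < N.+1 | (d * e <= N)%N) b d * a e.
Proof.
have L1 : forall n, (1 <= n < N.+1)%N ->
   \sum_(d <- divisors n) b d * a (n %/ d)%N =
   \sum_(1 <= d < N.+1) \sum_(1 <= e < N.+1) (if (d * e == n)%N then b d * a e else 0).
  move=> n /andP[n1 nN].
  have E : forall d, (1 <= d < N.+1)%N ->
     \sum_(1 <= e < N.+1) (if (d * e == n)%N then b d * a e else 0) =
     if (d %| n)%N then b d * a (n %/ d)%N else 0.
    move=> d /andP[d1 dN].
    case: (boolP (d %| n)%N) => dn.
      have Hin : (n %/ d)%N \in iota 1 N.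
        rewrite mem_iota.
        have : (n %/ d <= n)%N by apply: leq_div.
        have : (0 < n %/ d)%N by rewrite divn_gt0 // dvdn_leq.
        move=> h1 h2; apply/andP; split => //.
        rewrite add1n ltnS; exact: leq_trans h2 _.
      have := sel (n %/ d)%N (fun e => b d * a e) (iota_uniq 1 N).
      rewrite Hin => <-. rewrite /index_iota subn1 /=.
      apply: eq_bigr => e _.
      have -> : (d * e == n)%N = (e == n %/ d)%N.
        apply/eqP/eqP => [<-|->]; first by rewrite mulKn.
        by rewrite mulnC divnK.
      by [].
    rewrite big1 // => e _.
    case: eqP => // de; move: dn; by rewrite -de dvdn_mulr.
  rewrite (eq_big_nat _ _ E) -big_mkcond /= -[RHS]big_filter.
  apply: perm_big.
  apply: uniq_perm; first exact: divisors_uniq.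
    by apply: filter_uniq; apply: iota_uniq.
  move=> d; rewrite mem_filter mem_index_iota -dvdn_divisors //.
  case: (boolP (d %| n)%N) => //= dn.
  have := dvdn_leq n1 dn.
  move=> h; apply/esym/andP; split; last exact: leq_ltn_trans h nN.
  case: d dn h => // ; rewrite dvd0n => /eqP n0; by rewrite n0 in n1.
rewrite (eq_big_nat _ _ L1).
rewrite exchange_big.
apply: eq_big_seq => d; rewrite mem_index_iota => /andP[d1 dN].
rewrite exchange_big [RHS]big_mkcond.
apply: eq_big_seq => e; rewrite mem_index_iota => /andP[e1 eN].
rewrite /index_iota subSS subn0 (sel' (d * e)%N (fun _ => b d * a e) (iota_uniq 1 N)).
rewrite mem_iota add1n ltnS.
have -> : (1 <= d * e)%N by rewrite muln_gt0 d1 e1.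
by [].
Qed.

Lemma Rsum_le (I : Type) (r : seq I) (P : pred I) (F G : I -> R) :
  (forall i, P i -> Rle (F i) (G i)) ->
  Rle (\sum_(i <- r | P i) F i) (\sum_(i <- r | P i) G i).
Proof.
move=> H; elim: r => [|x r IH]; first by rewrite !big_nil; apply: Rle_refl.
rewrite !big_cons; case: (boolP (P x)) => Px //.
rewrite -!RplusE; apply: Rplus_le_compat => //; exact: H.
Qed.

Lemma Rsum_ge0 (I : Type) (r : seq I) (P : pred I) (F : I -> R) :
  (forall i, P i -> Rle 0 (F i)) -> Rle 0 (\sum_(i <- r | P i) F i).
Proof.
move=> H; elim: r => [|x r IH]; first by rewrite !big_nil; apply: Rle_refl.
rewrite !big_cons; case: (boolP (P x)) => Px //.
rewrite -!RplusE; apply: Rplus_le_le_0_compat => //; exact: H.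
Qed.

Lemma Cmod_sum (I : Type) (r : seq I) (P : pred I) (F : I -> C) :
  Rle (Cmod (\sum_(i <- r | P i) F i)) (\sum_(i <- r | P i) Cmod (F i)).
Proof.
elim: r => [|x r IH]; first by rewrite !big_nil Cmod_0; apply: Rle_refl.
rewrite !big_cons; case: (boolP (P x)) => Px //.
rewrite -!RplusE; apply: Rle_trans; first exact: Cmod_triangle.
by apply: Rplus_le_compat_l.
Qed.

Lemma square (x : nat -> nat -> R) K M : (K <= M)%N ->
  \sum_(1 <= d < M.+1) \sum_(1 <= e < M.+1)
     (if (d < K.+1)%N && (e < K.+1)%N then x d e else 0)
  = \sum_(1 <= d < K.+1) \sum_(1 <= e < K.+1) x d e.
Proof.
move=> KM.
have KM' : (K.+1 <= M.+1)%N by [].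
rewrite [RHS](big_nat_widen _ _ _ _ _ KM') [RHS]big_mkcond.
apply: eq_bigr => d _.
case: (d < K.+1)%N => /=.
  by rewrite [RHS](big_nat_widen _ _ _ _ _ KM') [RHS]big_mkcond.
by rewrite big1.
Qed.

Lemma fin_bound (a b : nat -> C) M K : (K * K <= M)%N ->
 Rle (Cmod (\sum_(1 <= n < M.+1) \sum_(d <- divisors n) b d * a (n %/ d)%N
            - (\sum_(1 <= i < M.+1) a i) * (\sum_(1 <= i < M.+1) b i))%R)
     ((\sum_(1 <= i < M.+1) Cmod (a i)) * (\sum_(1 <= i < M.+1) Cmod (b i))
      - (\sum_(1 <= i < K.+1) Cmod (a i)) * (\sum_(1 <= i < K.+1) Cmod (b i)))%R.
Proof.
move=> KKM.
have KM : (K <= M)%N by apply: leq_trans KKM; case: K => // K; apply: leq_pmull.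
rewrite conv_sum.
have E : (\sum_(1 <= i < M.+1) a i) * (\sum_(1 <= i < M.+1) b i) =
   \sum_(1 <= d < M.+1) \sum_(1 <= e < M.+1) b d * a e.
  rewrite mulrC big_distrl; apply: eq_bigr => d _; by rewrite big_distrr.
have E2 : \sum_(1 <= d < M.+1) \sum_(1 <= e < M.+1) b d * a e =
   \sum_(1 <= d < M.+1) \sum_(1 <= e < M.+1 | (d * e <= M)%N) b d * a e +
   \sum_(1 <= d < M.+1) \sum_(1 <= e < M.+1 | ~~ (d * e <= M)%N) b d * a e.
  rewrite -big_split; apply: eq_bigr => d _; by rewrite (bigID (fun e => (d * e <= M)%N)).
rewrite E E2 opprD addrA subrr add0r.
have Co : forall z : C, Cmod ((- z)%R) = Cmod z by move=> z; exact: Cmod_opp.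
rewrite Co.
pose T1 := (\sum_(1 <= d < M.+1) \sum_(1 <= e < M.+1 | ~~ (d * e <= M)%N) Cmod (b d) * Cmod (a e))%R.
pose T2 := (\sum_(1 <= d < M.+1) \sum_(1 <= e < M.+1) (if ~~ ((d < K.+1)%N && (e < K.+1)%N) then Cmod (b d) * Cmod (a e) else 0))%R.
apply: (Rle_trans _ T1).
  apply: Rle_trans; first exact: Cmod_sum.
  apply: Rsum_le => d _.
  apply: Rle_trans; first exact: Cmod_sum.
  apply: Rsum_le => e _.
  rewrite Cmod_mult; exact: Rle_refl.
have X : forall d e, Rle 0 (Cmod (b d) * Cmod (a e)).
  move=> d e; apply: Rmult_le_pos; exact: Cmod_ge_0.
apply: (Rle_trans _ T2).
  apply: Rsum_le => d _.
  rewrite big_mkcond.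
  apply: Rsum_le => e _.
  case: (boolP (d * e <= M)%N) => /= de.
    case: ifP => _; [exact: X | exact: Rle_refl].
  have -> : ~~ ((d < K.+1)%N && (e < K.+1)%N).
    apply/negP => /andP[dK eK]; move/negP: de; apply.
    by apply: leq_trans KKM; apply: leq_mul.
  exact: Rle_refl.
rewrite /T2.
have E3 : forall d, \sum_(1 <= e < M.+1) (if ~~ ((d < K.+1)%N && (e < K.+1)%N) then Cmod (b d) * Cmod (a e) else 0)
   = \sum_(1 <= e < M.+1) Cmod (b d) * Cmod (a e) -
     \sum_(1 <= e < M.+1) (if ((d < K.+1)%N && (e < K.+1)%N) then Cmod (b d) * Cmod (a e) else 0).
  move=> d; apply/eqP; rewrite eq_sym subr_eq -big_split; apply/eqP.
  apply: eq_bigr => e _; by case: ((d < K.+1)%N && (e < K.+1)%N); rewrite /= ?addr0 ?add0r.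
rewrite (eq_bigr _ (fun d _ => E3 d)) sumrB square //.
have E4 : forall L, \sum_(1 <= d < L.+1) \sum_(1 <= e < L.+1) Cmod (b d) * Cmod (a e) =
   (\sum_(1 <= i < L.+1) Cmod (a i)) * (\sum_(1 <= i < L.+1) Cmod (b i)).
  move=> L; rewrite mulrC big_distrl; apply: eq_bigr => d _; by rewrite big_distrr.
rewrite !E4; exact: Rle_refl.
Qed.

Lemma fin_abs (a b : nat -> C) M :
 Rle (\sum_(1 <= n < M.+1) Cmod (\sum_(d <- divisors n) b d * a (n %/ d)%N))
     ((\sum_(1 <= i < M.+1) Cmod (a i)) * (\sum_(1 <= i < M.+1) Cmod (b i)))%R.
Proof.
apply: Rle_trans.
  apply: Rsum_le => n _.
  apply: Rle_trans; first exact: Cmod_sum.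
  apply: Rsum_le => d _. rewrite Cmod_mult; exact: Rle_refl.
rewrite (conv_sum (fun i => Cmod (a i)) (fun i => Cmod (b i))).
have -> : (\sum_(1 <= i < M.+1) Cmod (a i)) * (\sum_(1 <= i < M.+1) Cmod (b i)) =
   \sum_(1 <= d < M.+1) \sum_(1 <= e < M.+1) Cmod (b d) * Cmod (a e).
  rewrite mulrC big_distrl; apply: eq_bigr => d _; by rewrite big_distrr.
apply: Rsum_le => d _.
rewrite [X in Rle _ X](bigID (fun e => (d * e <= M)%N)) /= -RplusE.
have := Rsum_ge0 _ (index_iota 1 M.+1) (fun e => ~~ (d * e <= M)%N) (fun e => Cmod (b d) * Cmod (a e)).
have X : forall d e, Rle 0 (Cmod (b d) * Cmod (a e)).
  move=> d' e; apply: Rmult_le_pos; exact: Cmod_ge_0.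
move=> /(_ (fun e _ => X d e)) H.
have H2 := Rplus_le_compat_l (\sum_(1 <= e < M.+1 | (d * e <= M)%N) Cmod (b d) * Cmod (a e))%R _ _ H.
rewrite Rplus_0_r in H2. exact: H2.
Qed.

Local Open Scope R_scope.
Lemma sum_nC (f : nat -> C) N : sum_n (fun n => f n.+1) N = (\sum_(1 <= i < N.+2) f i)%R.
Proof.
elim: N => [|N IH]; first by rewrite sum_O big_nat1.
rewrite sum_Sn IH [RHS]big_nat_recr //.
Qed.

Lemma sum_nR (f : nat -> R) N : sum_n (fun n => f n.+1) N = (\sum_(1 <= i < N.+2) f i)%R.
Proof.
elim: N => [|N IH]; first by rewrite sum_O big_nat1.
rewrite sum_Sn IH [RHS]big_nat_recr //.
Qed.

Lemma lim_of_series (f : nat -> R) : ex_series f -> is_lim_seq (sum_n f) (Series f).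
Proof. move=> H; exact: Series_correct H. Qed.

Lemma C_lim (f : nat -> C) (l : C) :
  is_lim_seq (fun n => Re (f n)) (Re l) -> is_lim_seq (fun n => Im (f n)) (Im l) ->
  filterlim f eventually (locally l).
Proof.
intros H1 H2. apply filterlim_locally. intros eps.
pose proof (proj1 (filterlim_locally _ _) H1 eps) as h1.
pose proof (proj1 (filterlim_locally _ _) H2 eps) as h2.
generalize (filter_and _ _ h1 h2). apply filter_imp. intros n [b1 b2]. split; assumption.
Qed.
Lemma C_lim_inv (f : nat -> C) (l : C) : filterlim f eventually (locally l) ->
  is_lim_seq (fun n => Re (f n)) (Re l) /\ is_lim_seq (fun n => Im (f n)) (Im l).
Proof.
intros H; split; apply filterlim_locally; intros eps;
pose proof (proj1 (filterlim_locally _ _) H eps) as h;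
revert h; apply filter_imp; intros n [b1 b2]; assumption.
Qed.

Lemma conv_series (a b : nat -> C) LA LB :
  is_series (fun n => a n.+1) LA -> is_series (fun n => b n.+1) LB ->
  ex_series (fun n => Cmod (a n.+1)) -> ex_series (fun n => Cmod (b n.+1)) ->
  is_series (fun n => (\sum_(d <- divisors n.+1) b d * a (n.+1 %/ d)%N)%R) (Cmult LA LB)
  /\ ex_series (fun n => Cmod (\sum_(d <- divisors n.+1) b d * a (n.+1 %/ d)%N)%R).
Proof.
move=> HSA HSB HAA HBB.
set PA := sum_n (fun n => Cmod (a n.+1)).
set PB := sum_n (fun n => Cmod (b n.+1)).
set AA := Series (fun n => Cmod (a n.+1)).
set BB := Series (fun n => Cmod (b n.+1)).
have HA : is_lim_seq PA AA by exact: lim_of_series.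
have HB : is_lim_seq PB BB by exact: lim_of_series.
have PAi : forall n, PA n <= PA (S n).
  move=> n; rewrite /PA sum_Sn; change plus with Rplus.
  have := Cmod_ge_0 (a n.+2); lra.
have PBi : forall n, PB n <= PB (S n).
  move=> n; rewrite /PB sum_Sn; change plus with Rplus.
  have := Cmod_ge_0 (b n.+2); lra.
have PAl : forall n, PA n <= AA by apply: is_lim_seq_incr_compare.
have PBl : forall n, PB n <= BB by apply: is_lim_seq_incr_compare.
have PA0 : forall n, 0 <= PA n.
  move=> n; rewrite /PA (sum_nR (fun i => Cmod (a i))); apply: Rsum_ge0 => i _; exact: Cmod_ge_0.
have PB0 : forall n, 0 <= PB n.
  move=> n; rewrite /PB (sum_nR (fun i => Cmod (b i))); apply: Rsum_ge0 => i _; exact: Cmod_ge_0.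
have Qle : forall n, PA n * PB n <= AA * BB.
  move=> n; apply: Rmult_le_compat; auto.
split; last first.
  pose u := sum_n (fun n => Cmod ((\sum_(d <- divisors n.+1) b d * a (n.+1 %/ d)%N)%R)).
  have [l Hl] : ex_finite_lim_seq u.
    apply: (ex_finite_lim_seq_incr _ (AA * BB)).
      move=> n; rewrite /u sum_Sn; change plus with Rplus.
      have := Cmod_ge_0 ((\sum_(d <- divisors n.+2) b d * a (n.+2 %/ d)%N)%R). lra.
    move=> n; apply: Rle_trans (Qle n).
    rewrite /u /PA /PB (sum_nR (fun i => Cmod (a i))) (sum_nR (fun i => Cmod (b i))).
    rewrite (sum_nR (fun i => Cmod (\sum_(d <- divisors i) b d * a (i %/ d)%N)%R)).
    exact: fin_abs.
  by exists l.
set SA := sum_n (fun n => a n.+1).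
set SB := sum_n (fun n => b n.+1).
rewrite /is_series.
set SC := sum_n _.
set D := fun N => minus (SC N) (mult (SA N) (SB N)).
have H1 : filterlim (fun N => mult (SA N) (SB N)) eventually (locally (mult LA LB)).
  have [A1 A2] := C_lim_inv _ _ HSA.
  have [B1 B2] := C_lim_inv _ _ HSB.
  apply: C_lim.
    apply: is_lim_seq_minus'; exact: is_lim_seq_mult'.
  apply: is_lim_seq_plus'; exact: is_lim_seq_mult'.
have Hbound : forall N k, ((k.+1 * k.+1) <= N.+1)%N ->
   norm (D N) <= PA N * PB N - PA k * PB k.
  move=> N k Hk.
  rewrite /D. change (@norm C_AbsRing C_NormedModule) with Cmod. rewrite /SC /SA /SB /PA /PB (sum_nR (fun i => Cmod (a i))) (sum_nR (fun i => Cmod (b i))).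
  rewrite (sum_nR (fun i => Cmod (a i))) (sum_nR (fun i => Cmod (b i))).
  rewrite (sum_nC a) (sum_nC b) (sum_nC (fun i => (\sum_(d <- divisors i) b d * a (i %/ d)%N)%R)).
  exact: (fin_bound a b N.+1 k.+1 Hk).
have H2' : filterlim (fun N => norm (D N)) eventually (locally 0).
  have HQ := is_lim_seq_mult' _ _ _ _ HA HB.
  apply (proj1 (is_lim_seq_spec (fun N => norm (D N)) 0)).
  move=> eps.
  move/is_lim_seq_spec: HQ => /(_ eps) [k Hk].
  exists ((k.+1 * k.+1).-1)%N => N HN.
  have HkN : ((k.+1 * k.+1) <= N.+1)%N.
    have HN' : ((k.+1 * k.+1).-1 <= N)%N by apply/leP.
    rewrite -ltnS in HN'. by rewrite prednK ?muln_gt0 in HN'.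
  have := Hbound N k HkN.
  have := Hk k (le_n k).
  have := Qle N.
  have := norm_ge_0 (D N).
  move=> h1 h2 h3 h4.
  rewrite Rminus_0_r Rabs_pos_eq //.
  move: h3; rewrite Rabs_minus_sym => /Rabs_def2 [h3 h3'].
  lra.
pose proof (filterlim_norm_zero D H2') as H2.
pose proof (filterlim_comp_2 _ _ _ H1 H2 (filterlim_plus (mult LA LB) zero)) as H3.
rewrite plus_zero_r in H3.
apply: filterlim_ext H3 => N /=.
rewrite /D /minus plus_comm -plus_assoc plus_opp_l plus_zero_r //.
Qed.

Lemma Zchain_S m N s :
  Zchain m.+1 N s = (\sum_(d <- divisors N) cpow_nat d (Copp s) * Zchain m d s)%R.
Proof.
rewrite /=. elim: (divisors N) => [|x r IH] /=; first by rewrite big_nil.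
by rewrite big_cons IH.
Qed.

Lemma Copp_plus (s t : C) : Copp (Cplus s t) = Cplus (Copp s) (Copp t).
Proof. case: s => [s1 s2]; case: t => [t1 t2]; rewrite /Copp /Cplus /=; f_equal; ring. Qed.

Lemma term_S m s t n :
  zeta_m_term m.+1 s t n =
  (\sum_(d <- divisors n.+1)
      (Zchain m d s * cpow_nat d (Copp (Cplus s t))) * cpow_nat (n.+1 %/ d)%N (Copp t))%R.
Proof.
rewrite /zeta_m_term Zchain_S.
change (Cmult ?x ?y) with (x * y)%R.
rewrite big_distrl /=.
apply: eq_big_seq => d.
rewrite -dvdn_divisors // => dn.
have d0 : (0 < d)%N by case: d dn => //; rewrite dvd0n.
have q0 : (0 < n.+1 %/ d)%N by rewrite divn_gt0 // dvdn_leq.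
have -> : cpow_nat n.+1 (Copp t) = (cpow_nat d (Copp t) * cpow_nat (n.+1 %/ d)%N (Copp t))%R.
  rewrite -{1}(divnK dn) mulnC; exact: cpow_mul.
rewrite Copp_plus -cpow_add.
change (Cmult ?x ?y) with (x * y)%R.
set x := cpow_nat d (Copp s). set y := cpow_nat d (Copp t). set z := Zchain m d s.
change (Cmult x y) with (x * y)%R.
by rewrite !mulrA (mulrC x z).
Qed.

Lemma sum_n_Re (a : nat -> C) N : Re (sum_n a N) = sum_n (fun n => Re (a n)) N.
Proof.
elim: N => [|N IH]; first by rewrite !sum_O.
rewrite !sum_Sn -IH //.
Qed.

Lemma sum_n_Im (a : nat -> C) N : Im (sum_n a N) = sum_n (fun n => Im (a n)) N.
Proof.
elim: N => [|N IH]; first by rewrite !sum_O.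
rewrite !sum_Sn -IH //.
Qed.

Lemma zeta_base t : 1 < Re t ->
  is_series (fun n => cpow_nat n.+1 (Copp t)) (zeta t) /\
  ex_series (fun n => Cmod (cpow_nat n.+1 (Copp t))).
Proof.
move=> Ht.
have Hab : ex_series (fun n => Cmod (cpow_nat n.+1 (Copp t))).
  apply: ex_series_ext (pseries (Re t) Ht) => n.
  by rewrite Cmod_cpow.
split => //.
have [L HL] : ex_series (fun n => cpow_nat n.+1 (Copp t)).
  apply: ex_series_le Hab => n.
  change norm with Cmod. exact: Rle_refl.
have [H1 H2] := C_lim_inv _ _ HL.
have E1 : Series (fun n => Re (cpow_nat n.+1 (Copp t))) = Re L.
  apply: is_series_unique.
  apply: is_lim_seq_ext H1 => N; exact: sum_n_Re.
have E2 : Series (fun n => Im (cpow_nat n.+1 (Copp t))) = Im L.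
  apply: is_series_unique.
  apply: is_lim_seq_ext H2 => N; exact: sum_n_Im.
have -> : zeta t = L by rewrite /zeta E1 E2; case: L {HL H1 H2 E1 E2}.
exact: HL.
Qed.

Lemma zeta_arg s t j :
  Cplus (Cmult s (RtoC (INR j.+1))) t = Cplus (Cmult s (RtoC (INR j))) (Cplus s t).
Proof.
case: s => [s1 s2]; case: t => [t1 t2]; rewrite S_INR /Cplus /Cmult /RtoC /=; f_equal; ring.
Qed.

Lemma zeta_prod_shift s t n j :
  foldr (fun k acc => Cmult (zeta (Cplus (Cmult s (RtoC (INR k))) t)) acc) (RtoC 1) (iota j.+1 n)
  = foldr (fun k acc => Cmult (zeta (Cplus (Cmult s (RtoC (INR k))) (Cplus s t))) acc) (RtoC 1) (iota j n).
Proof.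
elim: n j => [|n IH] j //=.
by rewrite IH zeta_arg.
Qed.

Lemma zeta_prod_S m s t : zeta_prod m.+1 s t = Cmult (zeta t) (zeta_prod m s (Cplus s t)).
Proof.
rewrite /zeta_prod.
change (iota 0 m.+2) with (0%N :: iota 1 m.+1).
cbn [foldr]. rewrite zeta_prod_shift.
have -> : Cplus (Cmult s (RtoC (INR 0))) t = t.
  case: s => [s1 s2]; case: t => [t1 t2]; rewrite /Cplus /Cmult /RtoC /=; f_equal; ring.
by [].
Qed.

Lemma main_ind s m : 0 < Re s -> forall t, 1 < Re t ->
  is_series (zeta_m_term m s t) (zeta_prod m s t) /\
  ex_series (fun n => Cmod (zeta_m_term m s t n)).
Proof.
move=> Hs; elim: m => [|m IH] t Ht.
  have [Z1 Z2] := zeta_base t Ht.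
  have E : forall n, zeta_m_term 0 s t n = cpow_nat n.+1 (Copp t).
    by move=> n; rewrite /zeta_m_term /= Cmult_1_l.
  have -> : zeta_prod 0 s t = zeta t.
    rewrite /zeta_prod /= Cmult_1_r.
    have -> : Cplus (Cmult s (RtoC (INR 0))) t = t.
      clear; case: s => [s1 s2]; case: t => [t1 t2]; rewrite /Cplus /Cmult /RtoC /=; f_equal; ring.
    by [].
  split; [apply: is_series_ext Z1 | apply: ex_series_ext Z2] => n; by rewrite E.
have Hst : 1 < Re (Cplus s t).
  have -> : Re (Cplus s t) = Re s + Re t by []. lra.
have [I1 I2] := IH _ Hst.
have [Z1 Z2] := zeta_base t Ht.
have := conv_series (fun e => cpow_nat e (Copp t))
   (fun d => Zchain m d s * cpow_nat d (Copp (Cplus s t)))%R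
   (zeta t) (zeta_prod m s (Cplus s t)) Z1 I1 Z2 I2.
case=> C1 C2.
rewrite zeta_prod_S; split.
  apply: is_series_ext C1 => n; by rewrite term_S.
apply: ex_series_ext C2 => n; by rewrite term_S.
Qed.

Theorem mainTheorem5 (m : nat) (s t : C) :
  (0 < m)%nat -> Rlt 0 (Re s) -> Rlt 1 (Re t) ->
  is_series (zeta_m_term m s t) (zeta_prod m s t).
Proof. move=> _ Hs Ht; exact: (proj1 (main_ind s m Hs t Ht)). Qed.
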